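(* Let $w_1,w_i\ge0$ with $w_1+w_i>0$, and let $\hat\mu_1,b_1,b_i,\hat\mu_i\in\mathcal M$ satisfy $\hat\mu_i\le b_i<b_1\le\hat\mu_1$. Set $\lambda=\frac{w_1b_1+w_ib_i}{w_1+w_i}$. Then for every $y\in[\hat\mu_i,\hat\mu_1]$, $$w_1\,d(\hat\mu_1,y)+w_i\,d(\hat\mu_i,y)\ \ge\ w_1\,d(b_1,\lambda)+w_i\,d(b_i,\lambda).$$
   Context: Fix a one-parameter canonical exponential family $\{\nu_\theta\}_{\theta\in\Theta}$ ($\Theta$ an open interval): $\frac{d\nu_\theta}{d\rho}(x)=\exp(x\theta-b(\theta))$ for a reference measure $\rho$ on $\mathbb R$, with $b(\theta)=\log\int e^{x\theta}d\rho(x)$. The mean map $\theta\mapsto b'(\theta)$ is a bijection from $\Theta$ onto an open interval $\mathcal M$, so members of the family are indexed by their mean. For $\mu,\mu'\in\mathcal M$, $d(\mu,\mu')$ denotes the Kullback–Leibler divergence from the member with mean $\mu$ to the member with mean $\mu'$. *)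

(* Defs.v *)
From HB Require Import structures.
From mathcomp Require Import all_boot all_order all_algebra.
From mathcomp Require Import all_classical all_reals all_analysis.
Set Implicit Arguments. Unset Strict Implicit. Unset Printing Implicit Defensive.
Import Order.TTheory GRing.Theory Num.Theory.
Import numFieldNormedType.Exports.
Local Open Scope classical_set_scope.
Local Open Scope ring_scope.

(* Canonical one-parameter exponential family generated by a reference
   measure rho on (the Borel sets of) R:
     d nu_theta / d rho (x) = exp (x theta - b theta),
     b theta = log \int exp (x theta) d rho (x). *)

Definition logpart (R : realType) (rho : {measure set (measurableTypeR R) -> \bar R})
  (theta : R) : R :=
  ln (fine (\int[rho]_x (expR (x * theta))%:E)).

Definition efdens (R : realType) (rho : {measure set (measurableTypeR R) -> \bar R})
  (theta x : R) : R :=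
  expR (x * theta - logpart rho theta).

Definition efmean (R : realType) (rho : {measure set (measurableTypeR R) -> \bar R})
  (theta : R) : R :=
  derive1 (logpart rho) theta.

Definition efKL (R : realType) (rho : {measure set (measurableTypeR R) -> \bar R})
  (theta theta' : R) : \bar R :=
  \int[rho]_x (efdens rho theta x *
               ln (efdens rho theta x / efdens rho theta' x))%:E.

(* natural parameter of the member with mean mu (the mean map is a
   bijection Theta -> M, so this is the unique theta in Theta with b'(theta) = mu) *)
Definition efparam (R : realType) (rho : {measure set (measurableTypeR R) -> \bar R})
  (Theta : set R) (mu : R) : R :=
  xget 0 [set theta | Theta theta /\ efmean rho theta = mu].

Definition efd (R : realType) (rho : {measure set (measurableTypeR R) -> \bar R})
  (Theta : set R) (mu mu' : R) : \bar R :=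
  efKL rho (efparam rho Theta mu) (efparam rho Theta mu').

Definition canonical_expfam (R : realType)
  (rho : {measure set (measurableTypeR R) -> \bar R}) (Theta M : set R) : Prop :=
  open Theta /\ is_interval Theta /\ Theta !=set0 /\
  (forall theta, Theta theta ->
     rho.-integrable setT (fun x => (expR (x * theta))%:E)) /\
  (forall theta, Theta theta -> derivable (logpart rho) theta 1) /\
  (forall t t', Theta t -> Theta t' -> efmean rho t = efmean rho t' -> t = t') /\
  efmean rho @` Theta = M /\
  open M /\ is_interval M.

(* Main.v *)
Require Import Defs.
From HB Require Import structures.
From mathcomp Require Import all_boot all_order all_algebra.
From mathcomp Require Import all_classical all_reals all_analysis.
From mathcomp Require Import measurable_realfun.
From mathcomp Require Import lra ring.
Import Order.TTheory GRing.Theory Num.Theory.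
Import numFieldNormedType.Exports.
Local Open Scope classical_set_scope.
Local Open Scope ring_scope.

Definition Zf {R : realType} (rho : {measure set (measurableTypeR R) -> \bar R}) (t : R) : R :=
  fine (\int[rho]_x (expR (x * t))%:E).

Definition mf {R : realType} (rho : {measure set (measurableTypeR R) -> \bar R}) (t : R) : R :=
  fine (\int[rho]_x (x * efdens rho t x)%:E).

Lemma dens_eq {R : realType} (rho : {measure set (measurableTypeR R) -> \bar R}) t x :
  0 < Zf rho t -> efdens rho t x = expR (x * t) / Zf rho t.
Proof. by move=> hZ; rewrite /efdens /logpart expRB lnK // posrE. Qed.
Arguments dens_eq {R rho t x}.

Lemma int_dens {R : realType} (rho : {measure set (measurableTypeR R) -> \bar R}) t :
  0 < Zf rho t ->
  rho.-integrable setT (fun x : measurableTypeR R => (expR (x * t))%:E) ->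
  rho.-integrable setT (fun x : measurableTypeR R => (efdens rho t x)%:E).
Proof.
move=> hZ hi.
apply: (eq_integrable _ (fun x : measurableTypeR R => ((Zf rho t)^-1)%:E * (expR (x * t))%:E)%E) => //.
  by move=> x _; rewrite dens_eq // -EFinM mulrC.
exact: integrableZl.
Qed.
Arguments int_dens {R rho t}.

Lemma int_xdens {R : realType} (rho : {measure set (measurableTypeR R) -> \bar R}) t :
  0 < Zf rho t ->
  rho.-integrable setT (fun x : measurableTypeR R => (x * expR (x * t))%:E) ->
  rho.-integrable setT (fun x : measurableTypeR R => (x * efdens rho t x)%:E).
Proof.
move=> hZ hi.
apply: (eq_integrable _ (fun x : measurableTypeR R => ((Zf rho t)^-1)%:E * (x * expR (x * t))%:E)%E) => //.
  by move=> x _; rewrite dens_eq // -EFinM mulrC mulrA.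
exact: integrableZl.
Qed.
Arguments int_xdens {R rho t}.

Lemma int_dens1 {R : realType} (rho : {measure set (measurableTypeR R) -> \bar R}) t :
  0 < Zf rho t ->
  rho.-integrable setT (fun x : measurableTypeR R => (expR (x * t))%:E) ->
  (\int[rho]_x (efdens rho t x)%:E = 1)%E.
Proof.
move=> hZ hi.
under eq_integral do rewrite dens_eq // mulrC EFinM.
rewrite integralZl // -(fineK (integrable_fin_num _ hi)) // -EFinM.
by rewrite -/(Zf rho t) mulVf // gt_eqF.
Qed.
Arguments int_dens1 {R rho t}.

Lemma KL_eq {R : realType} (rho : {measure set (measurableTypeR R) -> \bar R}) t t' :
  0 < Zf rho t ->
  rho.-integrable setT (fun x : measurableTypeR R => (expR (x * t))%:E) ->
  rho.-integrable setT (fun x : measurableTypeR R => (x * expR (x * t))%:E) ->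
  efKL rho t t' = ((t - t') * mf rho t - logpart rho t + logpart rho t')%:E.
Proof.
move=> hZ hi hxi.
have ip := int_dens hZ hi.
have ixp := int_xdens hZ hxi.
rewrite /efKL.
transitivity (\int[rho]_x ((t - t')%:E * (x * efdens rho t x)%:E +
   (logpart rho t' - logpart rho t)%:E * (efdens rho t x)%:E))%E.
  apply: eq_integral => x _; rewrite -!EFinM -EFinD; congr EFin.
  rewrite /efdens -expRB expRK.
  move: (logpart rho t) (logpart rho t') => A B; ring.
rewrite integralD //; [|exact: integrableZl|exact: integrableZl].
rewrite !integralZl // int_dens1 // -(fineK (integrable_fin_num _ ixp)) //.
rewrite -!EFinM -EFinD; congr EFin; rewrite /mf.
move: (fine (\int[rho]_x (x * efdens rho t x)%:E)) (logpart rho t) (logpart rho t') => m A B; ring.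
Qed.

Lemma subgrad {R : realType} (rho : {measure set (measurableTypeR R) -> \bar R}) t t' :
  0 < Zf rho t ->
  rho.-integrable setT (fun x : measurableTypeR R => (expR (x * t))%:E) ->
  rho.-integrable setT (fun x : measurableTypeR R => (x * expR (x * t))%:E) ->
  0 < Zf rho t' ->
  rho.-integrable setT (fun x : measurableTypeR R => (expR (x * t'))%:E) ->
  (t' - t) * mf rho t <= logpart rho t' - logpart rho t.
Proof.
move=> hZ hi hxi hZ' hi'.
have ip := int_dens hZ hi.
have ixp := int_xdens hZ hxi.
have ip' := int_dens hZ' hi'.
set c := logpart rho t' - logpart rho t.
have key : (\int[rho]_x (((1 - c)%:E * (efdens rho t x)%:E) + ((t' - t)%:E * (x * efdens rho t x)%:E))
   <= \int[rho]_x (efdens rho t' x)%:E)%E.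
  apply: le_integral => //.
    by apply: (integrableD _ (integrableZl _ _ ip) (integrableZl _ _ ixp)).
  move=> x _; rewrite -!EFinM -EFinD lee_fin.
  have -> : efdens rho t' x = efdens rho t x * expR (x * (t' - t) - c).
    rewrite /efdens -expRD /c; congr expR.
    by move: (logpart rho t) (logpart rho t') => A B; ring.
  have -> : (1 - c) * efdens rho t x + (t' - t) * (x * efdens rho t x) =
     efdens rho t x * (1 + (x * (t' - t) - c)) by ring.
  apply: ler_wpM2l; first by apply: ltW; exact: expR_gt0.
  exact: expR_ge1Dx.
rewrite (int_dens1 hZ' hi') in key.
rewrite (integralD measurableT (integrableZl _ _ ip) (integrableZl _ _ ixp)) in key.
rewrite (integralZl measurableT ip) (integralZl measurableT ixp) (int_dens1 hZ hi) in key.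
rewrite -(fineK (integrable_fin_num measurableT ixp)) in key.
rewrite -!EFinM -EFinD lee_fin in key.
rewrite /mf; move: key; move: (fine (\int[rho]_x (x * efdens rho t x)%:E)) => m.
clearbody c; clear; lra.
all: exact: measurableT.
Qed.

Lemma mexp (R : realType) (t : R) :
  measurable_fun [set: measurableTypeR R] (fun x : R => expR (x * t)).
Proof.
apply: measurableT_comp; first exact: measurable_expR.
exact: measurable_funM.
Qed.

Lemma mxexp (R : realType) (t : R) :
  measurable_fun [set: measurableTypeR R] (fun x : R => x * expR (x * t)).
Proof.
apply: measurable_funM => //; exact: mexp.
Qed.

Lemma abs_le_exp (R : realType) (x e : R) : 0 < e ->
  `|x| <= e^-1 * (expR (x * e) + expR (- (x * e))).
Proof.
move=> e0.
rewrite ler_pdivlMl //.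
have h1 : e * `|x| <= expR (e * `|x|).
  by apply: le_trans (expR_ge1Dx _); rewrite lerDr.
have p1 := expR_gt0 (x * e); have p2 := expR_gt0 (- (x * e)).
have [x0|x0] := leP 0 x.
  rewrite ger0_norm // in h1 *; rewrite mulrC in h1; lra.
rewrite ltr0_norm // in h1 *.
have -> : e * - x = - (x * e) by rewrite mulrN mulrC.
have E : e * - x = - (x * e) by rewrite mulrN mulrC.
rewrite E in h1; lra.
Qed.

Lemma xexp_bound (R : realType) (x t e : R) : 0 < e ->
  `|x * expR (x * t)| <= `|e^-1 * (expR (x * (t + e)) + expR (x * (t - e)))|.
Proof.
move=> e0.
rewrite normrM (ger0_norm (ltW (expR_gt0 _))).
rewrite [X in _ <= X]ger0_norm; last by apply: mulr_ge0; [rewrite invr_ge0 ltW|apply: addr_ge0; apply: ltW; apply: expR_gt0].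
have h := @abs_le_exp R x e e0.
have p := expR_gt0 (x * t).
rewrite expRN in h.
have h2 := ler_wpM2r (ltW p) h.
apply: le_trans h2 _.
rewrite le_eqVlt; apply/orP; left; apply/eqP.
rewrite (mulrDr x t e) (mulrBr x t e) expRD expRB.
have q := expR_gt0 (x * e).
field; rewrite ?gt_eqF //.
Qed.

Lemma int_xexp (R : realType) (rho : {measure set (measurableTypeR R) -> \bar R})
  (t e : R) : 0 < e ->
  rho.-integrable setT (fun x : measurableTypeR R => (expR (x * (t + e)))%:E) ->
  rho.-integrable setT (fun x : measurableTypeR R => (expR (x * (t - e)))%:E) ->
  rho.-integrable setT (fun x : measurableTypeR R => (x * expR (x * t))%:E).
Proof.
move=> e0 i1 i2.
have i3 : rho.-integrable setT (fun x : measurableTypeR R =>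
    (e^-1)%:E * ((expR (x * (t + e)))%:E + (expR (x * (t - e)))%:E))%E.
  apply: integrableZl => //.
  exact: (integrableD _ i1 i2).
apply: le_integrable i3 => //.
  by apply/measurable_EFinP; exact: mxexp.
move=> x _.
rewrite -EFinD -EFinM !abse_EFin lee_fin.
exact: xexp_bound.
Qed.

Lemma open_ball (R : realType) (A : set R) x : open A -> A x ->
  exists2 e : R, 0 < e & forall y, x - e < y < x + e -> A y.
Proof.
move=> oA Ax.
have := oA x Ax.
move=> /nbhs_ballP [e e0 he].
exists e => // y hy; apply: he.
rewrite ball_itv /= in_itv /=; exact: hy.
Qed.

Lemma Z0_all (R : realType) (rho : {measure set (measurableTypeR R) -> \bar R})
  (th : R) :
  (\int[rho]_x (expR (x * th))%:E = 0)%E ->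
  forall t, (\int[rho]_x (expR (x * t))%:E = 0)%E.
Proof.
move=> h0 t.
have mf : forall s : R, measurable_fun [set: measurableTypeR R] (fun x : measurableTypeR R => (expR (x * s))%:E).
  move=> s; apply/measurable_EFinP; apply: measurableT_comp; first exact: measurable_expR.
  exact: measurable_funM.
have abs : forall s, (\int[rho]_x (expR (x * s))%:E = \int[rho]_x `|(expR (x * s))%:E|)%E.
  by move=> s; apply: eq_integral => x _; rewrite gee0_abs // lee_fin ltW // expR_gt0.
have := (ae_eq_integral_abs rho measurableT (mf th)).1.
rewrite -abs => /(_ h0) [N [mN rN sN]].
have rT : rho setT = 0%E.
  apply/eqP; rewrite eq_le measure_ge0 andbT -rN; apply: le_measure; rewrite ?inE //.
  move=> x _; apply: sN => /= /(_ I) /eqP; rewrite eqe gt_eqF //; exact: expR_gt0.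
rewrite abs; exact: integral_abs_eq0.
Qed.

Lemma Zpos (R : realType) (rho : {measure set (measurableTypeR R) -> \bar R})
  (Theta M : set R) : canonical_expfam rho Theta M ->
  forall th, Theta th -> 0 < fine (\int[rho]_x (expR (x * th))%:E).
Proof.
move=> [oT [_ [_ [hint [_ [hinj _]]]]]] th hth.
have ge0 : (0 <= \int[rho]_x (expR (x * th))%:E)%E.
  by apply: integral_ge0 => x _; rewrite lee_fin ltW // expR_gt0.
have fin := integrable_fin_num measurableT (hint th hth).
rewrite lt_neqAle fine_ge0 // andbT; apply/negP => /eqP Z0.
have I0 : (\int[rho]_x (expR (x * th))%:E = 0)%E.
  by rewrite -(fineK fin) -Z0.
have lp : logpart rho = fun=> 0.
  apply: funext => t; rewrite /logpart (@Z0_all R rho th I0 t) /=; exact: ln0.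
have em : forall t, efmean rho t = 0.
  by move=> t; rewrite /efmean lp derive1_cst.
have [e e0 he] := @open_ball R Theta th oT hth.
have h2 : Theta (th + e / 2) by apply: he; apply/andP; split; lra.
have := hinj _ _ hth h2; rewrite !em => /(_ erefl) => E.
have : th + e / 2 - th = 0 by rewrite -E subrr.
lra.
Qed.

Lemma fermat_lin {R : realType} (b : R -> R) (m t e : R) : 0 < e ->
  (forall s, t - e < s < t + e -> derivable b s 1) ->
  (forall s, t - e < s < t + e -> b t - m * t <= b s - m * s) ->
  derive1 b t = m.
Proof.
move=> e0 hd hmin.
pose l := m *: (@id R).
have dl : forall s : R, derivable l s 1.
  move=> s; apply: derivableZ => //; exact: derivable_id.
have dg : forall s, s \in `]t - e, t + e[ -> derivable (b - l) s 1.
  move=> s; rewrite in_itv /= => hs; apply: derivableB => //; exact: hd.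
have ct : t \in `]t - e, t + e[ by rewrite in_itv /=; apply/andP; split; lra.
have le : t - e <= t + e by lra.
have := derive1_at_min le dg ct.
have hm : forall s, s \in `]t - e, t + e[ -> (b - l) t <= (b - l) s.
  by move=> s; rewrite in_itv /= => hs; apply: hmin.
move=> /(_ hm) hD.
have := @derive_val _ _ _ _ _ _ _ hD.
rewrite deriveB //; last exact: hd.
rewrite deriveZ //.

rewrite derive_id derive1E.
move=> /eqP; rewrite subr_eq0 => /eqP ->.
by rewrite /GRing.scale /= mulr1.
Qed.

Definition Dg {R : realFieldType} (t B : R -> R) (p q : R) := B q - B p - p * (t q - t p).

Lemma Dg3 {R : realFieldType} (t B : R -> R) p q y :
  Dg t B p y = Dg t B p q + Dg t B q y + (t q - t y) * (p - q).
Proof. rewrite /Dg; ring. Qed.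

Lemma Dgpp {R : realFieldType} (t B : R -> R) p : Dg t B p p = 0.
Proof. rewrite /Dg; ring. Qed.

Lemma final_alg {R : realFieldType} (M : set R) (t B : R -> R)
  (hD : forall p q, M p -> M q -> 0 <= Dg t B p q)
  (hmono : forall p q, M p -> M q -> p <= q -> t p <= t q)
  (w1 wi m1 b1 bi mi y : R)
  (hw1 : 0 <= w1) (hwi : 0 <= wi) (hw : 0 < w1 + wi)
  (Mm1 : M m1) (Mb1 : M b1) (Mbi : M bi) (Mmi : M mi) (My : M y)
  (h1 : mi <= bi) (h2 : bi < b1) (h3 : b1 <= m1) :
  M ((w1 * b1 + wi * bi) / (w1 + wi)) ->
  w1 * Dg t B b1 ((w1 * b1 + wi * bi) / (w1 + wi)) +
  wi * Dg t B bi ((w1 * b1 + wi * bi) / (w1 + wi)) <=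
  w1 * Dg t B m1 y + wi * Dg t B mi y.
Proof.
set lam := (w1 * b1 + wi * bi) / (w1 + wi) => Ml.
set H := w1 * Dg t B b1 lam + wi * Dg t B bi lam.
have hl : lam * (w1 + wi) = w1 * b1 + wi * bi.
  by rewrite /lam mulfVK // gt_eqF.
have K : forall z, w1 * Dg t B b1 z + wi * Dg t B bi z = H + (w1 + wi) * Dg t B lam z.
  move=> z; apply/eqP; rewrite -subr_eq0; apply/eqP.
  transitivity ((t lam - t z) * (w1 * b1 + wi * bi - lam * (w1 + wi))).
    by rewrite /H /Dg; ring.
  by rewrite hl subrr mulr0.
have KK : forall z, M z -> H <= w1 * Dg t B b1 z + wi * Dg t B bi z.
  move=> z Mz; rewrite K lerDl; apply: mulr_ge0; [exact: ltW|exact: hD].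
have A1 : forall z, M z -> z <= b1 -> Dg t B b1 z <= Dg t B m1 z.
  move=> z Mz hz; rewrite (Dg3 t B m1 b1 z).
  have := hD _ _ Mm1 Mb1.
  have : 0 <= (t b1 - t z) * (m1 - b1).
    by apply: mulr_ge0; rewrite subr_ge0 //; exact: hmono.
  lra.
have A2 : forall z, M z -> bi <= z -> Dg t B bi z <= Dg t B mi z.
  move=> z Mz hz; rewrite (Dg3 t B mi bi z).
  have := hD _ _ Mmi Mbi.
  have : 0 <= (t bi - t z) * (mi - bi).
    apply: mulr_le0; rewrite subr_le0 //.
    exact: (hmono bi z Mbi Mz hz).
  lra.
have [yl|yg] := leP y b1; last first.
  have e1 : Dg t B bi b1 <= Dg t B bi y.
    rewrite (Dg3 t B bi b1 y).
    have := hD _ _ Mb1 My.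
    have : 0 <= (t b1 - t y) * (bi - b1).
      apply: mulr_le0; rewrite subr_le0; [exact: (hmono _ _ Mb1 My (ltW yg))|exact: ltW].
    lra.
  have e2 := A2 y My (ltW (lt_trans h2 yg)).
  have := KK b1 Mb1; rewrite Dgpp mulr0 add0r => e3.
  have e4 : wi * Dg t B bi b1 <= wi * Dg t B mi y.
    by apply: ler_wpM2l => //; exact: le_trans e1 e2.
  have e5 : 0 <= w1 * Dg t B m1 y by apply: mulr_ge0 => //; exact: hD.
  lra.
have [yb|yb] := leP bi y.
  have e1 := A1 y My yl.
  have e2 := A2 y My yb.
  have := KK y My.
  have : w1 * Dg t B b1 y <= w1 * Dg t B m1 y by exact: ler_wpM2l.
  have : wi * Dg t B bi y <= wi * Dg t B mi y by exact: ler_wpM2l.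
  lra.
have e1 : Dg t B b1 bi <= Dg t B b1 y.
  rewrite (Dg3 t B b1 bi y).
  have := hD _ _ Mbi My.
  have : 0 <= (t bi - t y) * (b1 - bi).
    apply: mulr_ge0; rewrite subr_ge0; [exact: (hmono _ _ My Mbi (ltW yb))|exact: ltW].
  lra.
have e2 := A1 y My yl.
have := KK bi Mbi; rewrite Dgpp mulr0 addr0 => e3.
have e4 : w1 * Dg t B b1 bi <= w1 * Dg t B m1 y.
  by apply: ler_wpM2l => //; exact: le_trans e1 e2.
have e5 : 0 <= wi * Dg t B mi y by apply: mulr_ge0 => //; exact: hD.
lra.
Qed.

Lemma fam_facts {R : realType} (rho : {measure set (measurableTypeR R) -> \bar R})
  (Theta M : set R) : canonical_expfam rho Theta M ->
  forall t, Theta t ->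
  [/\ 0 < Zf rho t,
     rho.-integrable setT (fun x : measurableTypeR R => (expR (x * t))%:E),
     rho.-integrable setT (fun x : measurableTypeR R => (x * expR (x * t))%:E) &
     mf rho t = efmean rho t].
Proof.
move=> hfam t ht.
have hZ := @Zpos R rho Theta M hfam.
case: hfam => [oT [_ [_ [hint [hder _]]]]].
have [e e0 he] := @open_ball R Theta t oT ht.
have hxi : rho.-integrable setT (fun x : measurableTypeR R => (x * expR (x * t))%:E).
  apply: (@int_xexp R rho t (e / 2)); first lra.
    by apply: hint; apply: he; apply/andP; split; lra.
  by apply: hint; apply: he; apply/andP; split; lra.
split => //; [exact: hZ|exact: hint|].
apply/esym; rewrite /efmean; apply: (@fermat_lin R (logpart rho) (mf rho t) t e e0).
  by move=> s hs; apply: hder; apply: he.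
move=> s hs.
have hs' : Theta s by apply: he.
have := @subgrad R rho t s (hZ t ht) (hint t ht) hxi (hZ s hs') (hint s hs').
move: (mf rho t) (logpart rho t) (logpart rho s) => m A B; clear; lra.
Qed.
Arguments fam_facts {R rho Theta M}.

Lemma param_facts {R : realType} (rho : {measure set (measurableTypeR R) -> \bar R})
  (Theta M : set R) : canonical_expfam rho Theta M ->
  forall mu, M mu -> Theta (efparam rho Theta mu) /\ efmean rho (efparam rho Theta mu) = mu.
Proof.
move=> [_ [_ [_ [_ [_ [_ [himg _]]]]]]] mu hmu.
rewrite -himg in hmu; case: hmu => th hth hm.
rewrite /efparam; apply: (@xgetPex _ 0 [set theta | Theta theta /\ efmean rho theta = mu]).
by exists th.
Qed.
Arguments param_facts {R rho Theta M}.

Lemma sub_mu {R : realType} (rho : {measure set (measurableTypeR R) -> \bar R})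
  (Theta M : set R) : canonical_expfam rho Theta M ->
  forall p q, M p -> M q ->
  (efparam rho Theta q - efparam rho Theta p) * p <=
  logpart rho (efparam rho Theta q) - logpart rho (efparam rho Theta p).
Proof.
move=> hfam p q Mp Mq.
have [tp mp] := param_facts hfam _ Mp.
have [tq mq] := param_facts hfam _ Mq.
have [Zp Ip XIp mmp] := fam_facts hfam _ tp.
have [Zq Iq XIq mmq] := fam_facts hfam _ tq.
have := @subgrad R rho _ _ Zp Ip XIp Zq Iq.
by rewrite mmp mp.
Qed.
Arguments sub_mu {R rho Theta M}.

Lemma efd_eq {R : realType} (rho : {measure set (measurableTypeR R) -> \bar R})
  (Theta M : set R) : canonical_expfam rho Theta M ->
  forall p q, M p -> M q ->
  efd rho Theta p q =
  (Dg (efparam rho Theta) (fun u => logpart rho (efparam rho Theta u)) p q)%:E.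
Proof.
move=> hfam p q Mp Mq.
have [tp mp] := param_facts hfam _ Mp.
have [Zp Ip XIp mmp] := fam_facts hfam _ tp.
rewrite /efd (@KL_eq R rho _ _ Zp Ip XIp) mmp mp /Dg; congr EFin.
move: (efparam rho Theta p) (efparam rho Theta q) => a b.
move: (logpart rho a) (logpart rho b) => A B; ring.
Qed.
Arguments efd_eq {R rho Theta M}.

Lemma Dg_ge0 {R : realType} (rho : {measure set (measurableTypeR R) -> \bar R})
  (Theta M : set R) : canonical_expfam rho Theta M ->
  forall p q, M p -> M q ->
  0 <= Dg (efparam rho Theta) (fun u => logpart rho (efparam rho Theta u)) p q.
Proof.
move=> hfam p q Mp Mq.
have := sub_mu hfam _ _ Mp Mq.
rewrite /Dg mulrC.
move: (efparam rho Theta p) (efparam rho Theta q) => a b.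
move: (logpart rho a) (logpart rho b) => A B; lra.
Qed.
Arguments Dg_ge0 {R rho Theta M}.

Lemma t_mono {R : realType} (rho : {measure set (measurableTypeR R) -> \bar R})
  (Theta M : set R) : canonical_expfam rho Theta M ->
  forall p q, M p -> M q -> p <= q ->
  efparam rho Theta p <= efparam rho Theta q.
Proof.
move=> hfam p q Mp Mq hpq.
case: (leP (efparam rho Theta p) (efparam rho Theta q)) => // hlt.
have h1 := sub_mu hfam _ _ Mp Mq.
have h2 := sub_mu hfam _ _ Mq Mp.
have h3 : (efparam rho Theta p - efparam rho Theta q) * (q - p) <= 0.
  move: h1 h2; set a := efparam rho Theta p; set b := efparam rho Theta q.
  set A := logpart rho a; set B := logpart rho b.
  move=> h1 h2.
  have -> : (a - b) * (q - p) = (b - a) * p + (a - b) * q by ring.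
  lra.
have h4 : q - p <= 0.
  by rewrite -(pmulr_rle0 _ (x := efparam rho Theta p - efparam rho Theta q)) // subr_gt0.
have epq : p = q by apply/le_anti/andP; split => //; move: h4; clear; lra.
by move: hlt; rewrite epq ltxx.
Qed.
Arguments t_mono {R rho Theta M}.

Theorem mainTheorem6 (R : realType)
  (rho : {measure set (measurableTypeR R) -> \bar R}) (Theta M : set R)
  (hfam : canonical_expfam rho Theta M)
  (w1 wi muh1 b1 bi muhi : R)
  (hw1 : 0 <= w1) (hwi : 0 <= wi) (hw : 0 < w1 + wi)
  (hmu1 : M muh1) (hb1 : M b1) (hbi : M bi) (hmui : M muhi)
  (h1 : muhi <= bi) (h2 : bi < b1) (h3 : b1 <= muh1) :
  let lambda := (w1 * b1 + wi * bi) / (w1 + wi) in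
  forall y : R, muhi <= y <= muh1 ->
  (w1%:E * efd rho Theta muh1 y + wi%:E * efd rho Theta muhi y >=
   w1%:E * efd rho Theta b1 lambda + wi%:E * efd rho Theta bi lambda)%E.
Proof.
move=> lambda y hy.
have hf := hfam.
case: hf => [_ [_ [_ [_ [_ [_ [_ [_ iM]]]]]]]].
have My : M y by apply: (iM muhi muh1).
have Ml : M lambda.
  apply: (iM bi b1) => //; apply/andP; split; rewrite /lambda.
    rewrite ler_pdivlMr //; nra.
  rewrite ler_pdivrMr //; nra.
rewrite (efd_eq hfam _ _ hmu1 My) (efd_eq hfam _ _ hmui My).
rewrite (efd_eq hfam _ _ hb1 Ml) (efd_eq hfam _ _ hbi Ml).
rewrite -!EFinM -!EFinD lee_fin.
apply: (@final_alg R M) => //.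
- exact: (Dg_ge0 hfam).
- exact: (t_mono hfam).
Qed.
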